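(* Every D-cube has property L.
   Context: For sets $U,V$ let $U\oplus V=(U\cup V)\setminus(U\cap V)$. An $n$-cube orientation is a directed graph $\mathcal{O}$ on the vertex set of all subsets of $[n]$ containing, for each vertex $V$ and $i\in[n]$, exactly one of the directed edges $(V,V\oplus\{i\})$, $(V\oplus\{i\},V)$; its outmap is $\phi(V)=\{i: (V,V\oplus\{i\})\in\mathcal{O}\}$, which determines $\mathcal{O}$. For a vertex $V$, the L-graph $\mathcal{L}_{\mathcal{O}}(V)$ has vertex set $[n]\setminus V$ and an arc $(i,j)$ for distinct $i,j\notin V$ whenever $j\in\phi(V)\oplus\phi(V\cup\{i\})$; $\mathcal{O}$ has property L if all its L-graphs are acyclic. Given $M\in\mathbb{R}^{n\times n}$ and $V\subseteq[n]$, let $M(V)$ be the $n\times n$ matrix whose $i$-th column is $-M_i$ (the negative of the $i$-th column of $M$) if $i\in V$ and the $i$-th unit vector $I_i$ if $i\notin V$. A D-cube is an $n$-cube orientation whose outmap is $\phi(V)=\{i\in[n]: (M(V)^{-1}\mathbf{q})_i<0\}$ for all $V\subseteq[n]$, where $M$ is a symmetric positive definite matrix and $\mathbf{q}\in\mathbb{R}^n$ is generic with respect to $M$, meaning that no entry of $M(V)^{-1}\mathbf{q}$ is zero for any $V\subseteq[n]$. (Such an orientation is a unique sink orientation: every face has exactly one sink.) *)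

(* Defs.v *)
From HB Require Import structures.
From mathcomp Require Import all_boot all_order all_algebra.
From mathcomp Require Import reals.
Set Implicit Arguments. Unset Strict Implicit. Unset Printing Implicit Defensive.
Import Order.TTheory GRing.Theory Num.Theory.
Local Open Scope ring_scope.

Definition setSD (T : finType) (U V : {set T}) : {set T} :=
  (U :|: V) :\: (U :&: V).

Definition MV (R : pzRingType) (n : nat) (M : 'M[R]_n) (V : {set 'I_n}) : 'M[R]_n :=
  \matrix_(k < n, i < n) (if i \in V then - M k i else (k == i)%:R).

Definition sym_posdef (R : realType) (n : nat) (M : 'M[R]_n) : Prop :=
  M^T = M /\ forall x : 'cV[R]_n, x != 0 -> 0 < (x^T *m M *m x) 0 0.

Definition generic_wrt (R : realType) (n : nat) (M : 'M[R]_n) (q : 'cV[R]_n) : Prop :=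
  forall (V : {set 'I_n}) (i : 'I_n), (invmx (MV M V) *m q) i 0 != 0.

Definition Dcube_outmap (R : realType) (n : nat) (M : 'M[R]_n) (q : 'cV[R]_n)
  (V : {set 'I_n}) : {set 'I_n} :=
  [set i | (invmx (MV M V) *m q) i 0 < 0].

Definition Lgraph (n : nat) (phi : {set 'I_n} -> {set 'I_n}) (V : {set 'I_n})
  : rel 'I_n :=
  fun i j => [&& i != j, i \notin V, j \notin V & j \in setSD (phi V) (phi (i |: V))].

Definition acyclic (T : eqType) (e : rel T) : Prop :=
  forall s : seq T, s != [::] -> ~~ cycle e s.

Definition property_L (n : nat) (phi : {set 'I_n} -> {set 'I_n}) : Prop :=
  forall V : {set 'I_n}, acyclic (Lgraph phi V).

(* Main.v *)
Require Import Defs.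
From HB Require Import structures.
From mathcomp Require Import all_boot all_order all_algebra.
From mathcomp Require Import reals.
From mathcomp Require Import ring lra.
Set Implicit Arguments. Unset Strict Implicit. Unset Printing Implicit Defensive.
Local Open Scope ring_scope.
Import Order.TTheory GRing.Theory Num.Theory.

Definition zpart (R : realType) n (W : {set 'I_n}) (s : 'cV[R]_n) : 'cV[R]_n :=
  \col_k (if k \in W then s k 0 else 0).
Definition wpart (R : realType) n (W : {set 'I_n}) (s : 'cV[R]_n) : 'cV[R]_n :=
  \col_k (if k \in W then 0 else s k 0).

Lemma MV_mul (R : realType) n (M : 'M[R]_n) W (s : 'cV[R]_n) :
  MV M W *m s = wpart W s - M *m zpart W s.
Proof.
apply/matrixP => k l; rewrite (ord1 l) !mxE.
transitivity (\sum_j (((k == j)%:R * (wpart W s) j 0) - M k j * (zpart W s) j 0)).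
  apply: eq_bigr => j _; rewrite !mxE; case: (j \in W).
    by rewrite mulr0 sub0r mulNr.
  by rewrite mulr0 subr0.
rewrite big_split /= sumrN; congr (_ - _).

rewrite (bigD1 k) //= eqxx mul1r big1 ?addr0; first by rewrite mxE.
by move=> j nj; rewrite eq_sym (negbTE nj) mul0r.
Qed.

Lemma dot1 (R : realType) n (u v : 'cV[R]_n) k :
  (forall l, l != k -> u l 0 * v l 0 = 0) -> (u^T *m v) 0 0 = u k 0 * v k 0.
Proof.
move=> H; rewrite mxE (bigD1 k) //= mxE big1 ?addr0 // => l nl.
by rewrite mxE; apply: H.
Qed.

Lemma MV_unit (R : realType) n (M : 'M[R]_n) W :
  sym_posdef M -> MV M W \in unitmx.
Proof.
move=> [Msym Mpd].
have inj: forall s : 'cV[R]_n, MV M W *m s = 0 -> s = 0.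
  move=> s; rewrite MV_mul => /eqP; rewrite subr_eq0 => /eqP Hw.
  have z0: zpart W s = 0.
    apply/eqP; apply: contraT => nz; have := Mpd _ nz.
    rewrite -mulmxA -Hw mxE big1 ?ltxx // => l _.
    by rewrite !mxE; case: (l \in W); rewrite ?mulr0 ?mul0r.

  have w0: wpart W s = 0 by rewrite Hw z0 mulmx0.
  apply/matrixP => k l; rewrite (ord1 l) mxE.
  have := congr1 (fun m : 'cV[R]_n => m k 0) z0; have := congr1 (fun m : 'cV[R]_n => m k 0) w0.
  by rewrite !mxE; case: (k \in W).
rewrite -unitmx_tr -row_free_unit -kermx_eq0; apply/eqP/row_matrixP => k.
rewrite row0.
have: row k (kermx (MV M W)^T) *m (MV M W)^T = 0 by rewrite -row_mul mulmx_ker row0.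
move=> /(congr1 (@trmx _ _ _)); rewrite trmx_mul trmxK trmx0 => /inj.
by move=> /(congr1 (@trmx _ _ _)); rewrite trmxK trmx0.
Qed.

Definition sol (R : realType) n (M : 'M[R]_n) (q : 'cV[R]_n) (W : {set 'I_n}) := invmx (MV M W) *m q.

Lemma solE (R : realType) n (M : 'M[R]_n) (q : 'cV[R]_n) (W : {set 'I_n}) (l : 'I_n) : sym_posdef M ->
  q l 0 = (if l \in W then 0 else sol M q W l 0) - (M *m zpart W (sol M q W)) l 0.
Proof.
move=> HM; have := congr1 (fun m : 'cV[R]_n => m l 0) (MV_mul M W (sol M q W)).
rewrite /sol mulKVmx ?MV_unit // => ->.
move: (M *m _) => X; by rewrite !mxE.
Qed.

Definition delta (R : realType) n (M : 'M[R]_n) (q : 'cV[R]_n) (V : {set 'I_n}) (i : 'I_n) :=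
  zpart (i |: V) (sol M q (i |: V)) - zpart V (sol M q V).

Lemma step (R : realType) n (M : 'M[R]_n) (q : 'cV[R]_n) (V : {set 'I_n}) (i : 'I_n) : sym_posdef M -> i \notin V ->
  [/\ forall l, l \notin i |: V -> delta M q V i l 0 = 0,
      delta M q V i i 0 = sol M q (i |: V) i 0,
      forall l, l \in V -> (M *m delta M q V i) l 0 = 0,
      (M *m delta M q V i) i 0 = - sol M q V i 0 &
      forall l, l \notin i |: V ->
        (M *m delta M q V i) l 0 = sol M q (i |: V) l 0 - sol M q V l 0].
Proof.
move=> HM niV.
have MA l : (M *m delta M q V i) l 0 =
   (if l \in i |: V then 0 else sol M q (i |: V) l 0) -
   (if l \in V then 0 else sol M q V l 0).
  have e1 := solE q (i |: V) l HM; have e0 := solE q V l HM.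
  rewrite /delta mulmxBr.
  move: (M *m zpart _ _) (M *m zpart _ _) e1 e0 => X Y e1 e0.
  move: (sol M q (i |: V)) (sol M q V) e1 e0 => s1 s0 e1 e0. rewrite !mxE.
  move: e1 e0; set a := (if l \in i |: V then _ else _); set b := (if l \in V then _ else _); lra.
have Ae l : delta M q V i l 0 =
   (if l \in i |: V then sol M q (i |: V) l 0 else 0) -
   (if l \in V then sol M q V l 0 else 0) by rewrite !mxE.
split.
- move=> l nl; rewrite Ae (negbTE nl).
  have -> : (l \in V) = false.
    by apply/negbTE; apply: contra nl => lV; rewrite setU1r.
  by rewrite subr0.
- by rewrite Ae setU11 (negbTE niV) subr0.
- by move=> l lV; rewrite MA setU1r // lV subr0.
- by rewrite MA setU11 (negbTE niV) sub0r.
- move=> l nl; rewrite MA (negbTE nl).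
  have -> : (l \in V) = false.
    by apply/negbTE; apply: contra nl => lV; rewrite setU1r.
  by [].
Qed.

Definition form (R : realType) n (M : 'M[R]_n) (u v : 'cV[R]_n) :=
  (u^T *m (M *m v)) 0 0.

Lemma form_sym (R : realType) n (M : 'M[R]_n) u v : M^T = M ->
  form M u v = form M v u.
Proof.
move=> Ms; rewrite /form.
have t : forall A : 'M[R]_1, A 0 0 = A^T 0 0 by move=> A; rewrite mxE.
by rewrite t !trmx_mul trmxK Ms mulmxA.
Qed.

Lemma form_ge0 (R : realType) n (M : 'M[R]_n) u : sym_posdef M -> 0 <= form M u u.
Proof.
move=> [_ Mpd]; have [->|nz] := eqVneq u 0.
  by rewrite /form !mulmx0 mxE.
by rewrite /form mulmxA; apply/ltW/Mpd.
Qed.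

Lemma form_lin (R : realType) n (M : 'M[R]_n) u v w (a b : R) :
  form M (a *: u - b *: v) w = a * form M u w - b * form M v w.
Proof.
rewrite /form linearB /= !linearZ /= mulmxDl scalerN mulNmx -!scalemxAl.
move: (u^T *m _) (v^T *m _) => X Y; by rewrite !mxE.
Qed.

Lemma form_linr (R : realType) n (M : 'M[R]_n) u v w (a b : R) :
  form M w (a *: u - b *: v) = a * form M w u - b * form M w v.
Proof.
rewrite /form mulmxBr -!scalemxAr mulmxBr -!scalemxAr.
move: (w^T *m (M *m u)) (w^T *m (M *m v)) => X Y; by rewrite !mxE.
Qed.

Lemma cs (R : realType) n (M : 'M[R]_n) u v : sym_posdef M -> 0 < form M v v ->
  form M v u ^+ 2 <= form M u u * form M v v.
Proof.
move=> HM hc.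
have := form_ge0 (form M v v *: u - form M v u *: v) HM.
rewrite form_lin !form_linr (form_sym u v) ?(HM.1) //.
set a := form M u u; set b := form M v u; set c := form M v v.
move=> h.
have : 0 <= c * (a * c - b ^+ 2) by lra.
rewrite pmulr_rge0 //; lra.
Qed.

Lemma key (R:realType) (a c b : R) : 0 <= a -> 0 < c -> b^+2 <= a * c ->
  forall x y z, b = z * (y - x) -> c = - (z * x) -> x * y < 0 -> c < a.
Proof.
move=> ha hc hb x y z eb ec hxy.
have h1 : x^+2 < (y - x)^+2 by nra.
have hz : z != 0 by apply/eqP => z0; move: hc; rewrite ec z0 mul0r oppr0 ltxx.
have h2 : c^+2 < b^+2.
  rewrite eb ec sqrrN !exprMn ltr_pM2l //.
  by rewrite lt_def sqr_ge0 sqrf_eq0 hz.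
nra.
Qed.

Theorem theorem5p2 (R : realType) (n : nat) (M : 'M[R]_n) (q : 'cV[R]_n) :
  sym_posdef M -> generic_wrt M q -> property_L (Dcube_outmap M q).
Proof.
move=> HM Hg V.
pose g (k : 'I_n) := - (sol M q V k 0 * sol M q (k |: V) k 0).
have Hsub : forall a b, Lgraph (Dcube_outmap M q) V a b -> g b < g a.
  move=> i j /and4P [nij niV njV Hj].
  have [Ai1 Ai2 Ai3 Ai4 Ai5] := step q HM niV.
  have [Bj1 Bj2 Bj3 Bj4 Bj5] := step q HM njV.
  have nji : j \notin i |: V by rewrite in_setU1 negb_or eq_sym nij.
  set A := delta M q V i in Ai1 Ai2 Ai3 Ai4 Ai5.
  set B := delta M q V j in Bj1 Bj2 Bj3 Bj4 Bj5.
  have fAA : form M A A = - (sol M q (i |: V) i 0 * sol M q V i 0).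
    rewrite /form (dot1 (k := i)) ?Ai2 ?Ai4 ?mulrN // => l nl.
    case lV: (l \in V); first by rewrite Ai3 ?mulr0.
    by rewrite Ai1 ?mul0r // in_setU1 negb_or nl lV.
  have fBB : form M B B = - (sol M q (j |: V) j 0 * sol M q V j 0).
    rewrite /form (dot1 (k := j)) ?Bj2 ?Bj4 ?mulrN // => l nl.
    case lV: (l \in V); first by rewrite Bj3 ?mulr0.
    by rewrite Bj1 ?mul0r // in_setU1 negb_or nl lV.
  have fBA : form M B A =
      sol M q (j |: V) j 0 * (sol M q (i |: V) j 0 - sol M q V j 0).
    rewrite /form (dot1 (k := j)) ?Bj2 ?Ai5 // => l nl.
    case lV: (l \in V); first by rewrite Ai3 ?mulr0.
    by rewrite Bj1 ?mul0r // in_setU1 negb_or nl lV.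
  have hsign : sol M q V j 0 * sol M q (i |: V) j 0 < 0.
    have h0 := Hg V j; have h1 := Hg (i |: V) j.
    rewrite -/(sol M q V) -/(sol M q (i |: V)) in h0 h1.
    move: Hj; rewrite /setSD /Dcube_outmap !inE -/(sol M q V) -/(sol M q (i |: V)).
    move: h0 h1; move: (sol M q V j 0) (sol M q (i |: V) j 0) => x y hx hy.
    case: (ltrP x 0) => hx'; case: (ltrP y 0) => hy' //= _.
      have : 0 < y by rewrite lt_def hy hy'.
      nra.
    have : 0 < x by rewrite lt_def hx hx'.
    nra.
  have hB : 0 < form M B B.
    rewrite fBB.
    have h0 := Hg V j; have h1 := Hg (j |: V) j.
    rewrite -/(sol M q V) -/(sol M q (j |: V)) in h0 h1.
    have := form_ge0 B HM; rewrite fBB => h.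
    rewrite lt_def h andbT oppr_eq0 mulf_neq0 //.
  have -> : g j = form M B B by rewrite fBB /g mulrC.
  have -> : g i = form M A A by rewrite fAA /g mulrC.
  apply: (key (form_ge0 A HM) hB (cs A HM hB) fBA fBB).
  exact: hsign.
rewrite /acyclic; move=> [//|x s] _; apply/negP => Hc.
have Htr : transitive (fun a b => g b < g a).
  by move=> y x' z hxy hyz; exact: lt_trans hyz hxy.
have Hp : path (fun a b => g b < g a) x (rcons s x) := sub_path Hsub Hc.
have := order_path_min Htr Hp.
by move=> /allP /(_ x); rewrite mem_rcons mem_head ltxx => /(_ isT).
Qed.
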